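(* For every integer $k\geq 0$, $$d_{\mathcal F}\!\left(\frac{F_{k+1}}{F_k},\,\infty\right)=\lfloor k/2\rfloor+1,$$ where $(F_j)$ are the Fibonacci numbers indexed so that $F_0=F_1=1$ and $F_{j+1}=F_j+F_{j-1}$ (so $\frac{F_{k+1}}{F_k}=\frac11,\frac21,\frac32,\frac53,\dots$ for $k=0,1,2,3,\dots$), and $\infty=\frac10$.
   Context: The Farey graph has vertex set $\mathbb Q\cup\{\infty\}$, where each element is written in lowest terms $\frac ab$ ($\infty=\frac10$), and an edge between $\frac ab$ and $\frac cd$ exactly when $|ad-bc|=1$. (Equivalently, vertices are slopes of a torus, adjacent when they have representatives meeting transversely in one point.) $d_{\mathcal F}$ denotes the path-length distance in the Farey graph. *)

(* Defs.v *)
From Stdlib Require Import ZArith Arith Lia.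
Open Scope Z_scope.

(* A vertex a/b of the Farey graph, in lowest terms with a canonical sign:
   b > 0 and gcd(a,b) = 1 (a rational), or (a,b) = (1,0) (infinity). *)
Definition farey_vertex (v : Z * Z) : Prop :=
  let (a, b) := v in
  Z.gcd a b = 1 /\ (0 < b \/ (b = 0 /\ a = 1)).

Definition farey_infty : Z * Z := (1, 0).

Definition farey_adj (v w : Z * Z) : Prop :=
  let (a, b) := v in let (c, d) := w in Z.abs (a * d - b * c) = 1.

Inductive farey_walk : Z * Z -> Z * Z -> nat -> Prop :=
| fw_nil : forall x, farey_vertex x -> farey_walk x x 0
| fw_cons : forall x y z n, farey_vertex x -> farey_adj x y ->
    farey_walk y z n -> farey_walk x z (S n).

Definition farey_dist (x y : Z * Z) (n : nat) : Prop :=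
  farey_walk x y n /\ forall m, farey_walk x y m -> (n <= m)%nat.

Fixpoint fib (n : nat) : nat :=
  match n with
  | O => 1
  | S m => match m with
           | O => 1
           | S p => fib m + fib p
           end
  end%nat.

(* Main.v *)
Require Import Defs.
From Stdlib Require Import ZArith Arith.
From Stdlib Require Import Lia.

Open Scope Z_scope.

Definition f (n : nat) : Z := Z.of_nat (fib n).

Lemma f_rec : forall n, f (S (S n)) = f (S n) + f n.
Proof. intro n. unfold f. change (fib (S (S n))) with (fib (S n) + fib n)%nat. lia. Qed.

Lemma f_pos : forall n, 1 <= f n.
Proof.
  induction n as [n IH] using lt_wf_ind.
  destruct n as [|[|n]]; try (unfold f; simpl; lia).
  rewrite f_rec. pose proof (IH n ltac:(lia)). pose proof (IH (S n) ltac:(lia)). lia.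
Qed.

Definition E (n : nat) : Z := f (S n) * f (S n) - f n * f n - f n * f (S n).

Lemma E_sq : forall n, E n * E n = 1.
Proof.
  induction n.
  - unfold E, f; simpl; lia.
  - unfold E in *. rewrite f_rec. set (A := f n) in *. set (B := f (S n)) in *.
    replace ((A + B) * (A + B) - B * B - B * (A + B)) with (- (B * B - A * A - A * B)) by ring.
    lia.
Qed.

Lemma walk_vertex : forall x y n, farey_walk x y n -> farey_vertex x.
Proof. intros x y n H; destruct H; auto. Qed.

Lemma crossing : forall p q r s a b c d,
  (q*r - p*s) * (q*r - p*s) = 1 ->
  0 < (a*q - b*p) * (r*b - s*a) ->
  (c*q - d*p) * (r*d - s*c) < 0 ->
  Z.abs (a*d - b*c) = 1 -> False.
Proof.
  intros p q r s a b c d He Hin Hout Hadj.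
  set (e := q*r - p*s) in *.
  assert (Hid : (a*d - b*c) * e = (a*q - b*p) * (r*d - s*c) - (r*b - s*a) * (c*q - d*p))
    by (unfold e; ring).
  set (al := a*q - b*p) in *. set (be := r*b - s*a) in *.
  set (ga := c*q - d*p) in *. set (de := r*d - s*c) in *.
  assert (Habs : Z.abs (al*de - be*ga) = 1).
  { rewrite <- Hid. rewrite Z.abs_mul. rewrite Hadj.
    assert (e = 1 \/ e = -1) by nia. destruct H; rewrite H; reflexivity. }
  assert ((0 < al /\ 0 < be) \/ (al < 0 /\ be < 0)) by nia.
  assert ((0 < ga /\ de < 0) \/ (ga < 0 /\ 0 < de)) by nia.
  destruct H as [[]|[]]; destruct H0 as [[]|[]]; nia.
Qed.

Lemma same_point : forall p q r s c d,
  (q*r - p*s) * (q*r - p*s) = 1 -> 0 < q ->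
  Z.gcd c d = 1 -> 0 <= d -> c*q - d*p = 0 -> c = p /\ d = q.
Proof.
  intros p q r s c d He Hq Hg Hd Hga.
  set (e := q*r - p*s) in *. set (de := r*d - s*c).
  assert (H1 : c * e = p * de + r * (c*q - d*p)) by (unfold e, de; ring).
  assert (H2 : d * e = q * de + s * (c*q - d*p)) by (unfold e, de; ring).
  rewrite Hga in H1, H2.
  set (t := de * e).
  assert (Hc : c = p * t).
  { unfold t. transitivity (c * (e * e)); [rewrite He; ring|].
    rewrite Z.mul_assoc, H1. ring. }
  assert (Hd' : d = q * t).
  { unfold t. transitivity (d * (e * e)); [rewrite He; ring|].
    rewrite Z.mul_assoc, H2. ring. }
  assert (Ht : (t | 1)).
  { rewrite <- Hg. apply Z.gcd_greatest.
    - exists p. lia.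
    - exists q. lia. }
  apply Z.divide_1_r in Ht. destruct Ht as [Ht|Ht]; rewrite Ht in Hc, Hd'; lia.
Qed.

Lemma sep : forall u w n, farey_walk u w n ->
  forall p q r s, 0 < q -> 0 < s -> (q*r - p*s) * (q*r - p*s) = 1 ->
  0 < (fst u * q - snd u * p) * (r * snd u - s * fst u) ->
  (fst w * q - snd w * p) * (r * snd w - s * fst w) < 0 ->
  exists m, (m < n)%nat /\ (farey_walk (p,q) w m \/ farey_walk (r,s) w m).
Proof.
  induction 1; intros p q r s Hq Hs He Hin Hout.
  - lia.
  - destruct y as [c d].
    pose proof (walk_vertex _ _ _ H1) as Hv. simpl in Hv. destruct Hv as [Hg Hd].
    assert (Hd0 : 0 <= d) by lia.
    destruct (Z.eq_dec (c*q - d*p) 0) as [Hga|Hga].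
    + destruct (same_point p q r s c d He Hq Hg Hd0 Hga). subst.
      exists n. split; [lia|left; auto].
    + destruct (Z.eq_dec (r*d - s*c) 0) as [Hde|Hde].
      * assert (He' : (s*p - r*q) * (s*p - r*q) = 1) by nia.
        assert (Hde' : c*s - d*r = 0) by lia.
        destruct (same_point r s p q c d He' Hs Hg Hd0 Hde'). subst.
        exists n. split; [lia|right; auto].
      * destruct (Z_lt_le_dec 0 ((c*q - d*p) * (r*d - s*c))) as [Hi|Ho].
        -- destruct (IHfarey_walk p q r s Hq Hs He Hi Hout) as [m [Hm Hw]].
           exists m. split; [lia|auto].
        -- exfalso. destruct x as [a b]. simpl in *.
           apply (crossing p q r s a b c d He Hin); [nia|exact H0].
Qed.

Lemma div2_bounds : forall k : nat, (2 * (k/2) <= k < 2 * (k/2) + 2)%nat.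
Proof.
  intro k. pose proof (Nat.div_mod k 2 ltac:(lia)).
  pose proof (Nat.mod_upper_bound k 2 ltac:(lia)). lia.
Qed.

Lemma lower : forall k n, farey_walk (f (S k), f k) farey_infty n -> (k / 2 + 1 <= n)%nat.
Proof.
  induction k as [k IH] using lt_wf_ind. intros n Hw.
  destruct k as [|[|j]].
  - destruct n; [|simpl; lia]. inversion Hw.
  - destruct n; [|simpl; lia]. inversion Hw.
  - pose proof (f_pos j). pose proof (f_pos (S j)).
    pose proof (E_sq j) as HE. unfold E in HE.
    assert (Hr1 := f_rec j). assert (Hr2 := f_rec (S j)).
    destruct (sep _ _ _ Hw (f (S (S j))) (f (S j)) (f (S j)) (f j)) as [m [Hm [Hx|Hy]]];
      unfold farey_infty; cbn [fst snd]; try lia.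
    all: try (rewrite ?Hr2, ?Hr1; nia).
    + apply (IH (S j)) in Hx; [|lia].
      pose proof (div2_bounds (S j)). pose proof (div2_bounds (S (S j))). lia.
    + apply (IH j) in Hy; [|lia].
      pose proof (div2_bounds j). pose proof (div2_bounds (S (S j))). lia.
Qed.

Lemma gcd_f : forall k, Z.gcd (f (S k)) (f k) = 1.
Proof.
  intro k. apply Z.bezout_1_gcd. pose proof (E_sq k) as HE. unfold E in HE.
  exists (f (S k) * E k), (- (f k + f (S k)) * E k). unfold E. nia.
Qed.

Lemma vert_f : forall k, farey_vertex (f (S k), f k).
Proof. intro k. simpl. split. apply gcd_f. pose proof (f_pos k). lia. Qed.

Lemma infty_vertex : farey_vertex farey_infty.
Proof. simpl. split; [reflexivity|lia]. Qed.

Lemma upper : forall k, farey_walk (f (S k), f k) farey_infty (k / 2 + 1)%nat.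
Proof.
  induction k as [k IH] using lt_wf_ind.
  destruct k as [|[|j]].
  - change (0/2+1)%nat with 1%nat. apply fw_cons with farey_infty.
    apply (vert_f 0). unfold f; simpl; reflexivity.
    constructor. apply infty_vertex.
  - change (1/2+1)%nat with 1%nat. apply fw_cons with farey_infty.
    apply (vert_f 1). unfold f; simpl; reflexivity.
    constructor. apply infty_vertex.
  - replace (S (S j) / 2 + 1)%nat with (S (j / 2 + 1)).
    2:{ pose proof (div2_bounds j). pose proof (div2_bounds (S (S j))). lia. }
    eapply fw_cons. apply vert_f.
    2: apply IH; lia.
    simpl. pose proof (E_sq j) as HE. unfold E in HE.
    rewrite (f_rec (S j)), (f_rec j).
    set (A := f j) in *. set (B := f (S j)) in *.
    replace ((B + A + B) * A - (B + A) * B) with (-(B * B - A * A - A * B)) by ring.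
    rewrite Z.abs_opp. nia.
Qed.

Theorem lemma4p5 : forall k : nat,
  farey_dist (Z.of_nat (fib (S k)), Z.of_nat (fib k)) farey_infty (k / 2 + 1)%nat.
Proof.
  intro k. split.
  - apply (upper k).
  - intros m Hm. apply (lower k m Hm).
Qed.
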